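(* Let $\Omega\subset\mathbb{R}^N$ be a bounded open connected set, $F:\Omega\times\mathbb{R}\times\mathcal{S}(N)\to\mathbb{R}$ continuous with $\{(r,A):F(x,r,A)=0\}\neq\emptyset$ for each $x\in\Omega$, and let $\Phi$ be either a Hausdorff continuous proper elliptic map on $\Omega$ (constrained case) or $\Phi(x)=\mathbb{R}\times\mathcal{S}(N)$ for all $x$ (unconstrained case). Suppose $\Theta(x):=\{(r,A)\in\Phi(x):F(x,r,A)\ge0\}$ is a proper elliptic map. Assume that for every open $\Omega'\subset\subset\Omega$ and every $\eta>0$ there exists $\delta=\delta(\eta,\Omega')>0$ such that $F(y,r-\eta,A+\eta I)\ge F(x,r,A)$ for all $x,y\in\Omega'$ with $|x-y|<\delta$ and all $(r,A)\in\Phi(x)$. Then $\Theta$ is Hausdorff continuous on $\Omega$.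
   Context: $\mathcal{S}(N)$: real symmetric $N\times N$ matrices with the usual partial order, eigenvalues $\lambda_i(A)$, identity $I$. $\mathcal{Q}:=\{(s,P): s\le0,\ P\ge0\}$. A proper elliptic map assigns to each $x\in\Omega$ a closed, nonempty set $\subsetneq\mathbb{R}\times\mathcal{S}(N)$ invariant under adding elements of $\mathcal Q$. With the norm $\|(r,A)\|=\max\{|r|,\max_i|\lambda_i(A)|\}$ and the Hausdorff distance $d_{\mathcal H}$ between closed subsets (possibly $+\infty$), a map $\Theta$ is Hausdorff continuous on $\Omega$ if for all $x\in\Omega$ and $\eta>0$ there is $\delta>0$ with $d_{\mathcal H}(\Theta(x),\Theta(y))<\eta$ whenever $y\in\Omega$, $|x-y|<\delta$. *)

(* Defs.v *)
From HB Require Import structures.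
From mathcomp Require Import all_boot all_order all_algebra.
From mathcomp Require Import all_classical all_reals all_analysis.
Set Implicit Arguments. Unset Strict Implicit. Unset Printing Implicit Defensive.
Import Order.TTheory GRing.Theory Num.Theory.
Import numFieldNormedType.Exports.
Local Open Scope classical_set_scope.
Local Open Scope ring_scope.

Section Defs.
Variables (R : realType) (N : nat).

Definition eucl (x y : 'rV[R]_N) : R :=
  Num.sqrt (\sum_(i < N) (x ord0 i - y ord0 i) ^+ 2).

Definition symmx (A : 'M[R]_N) : Prop := A^T = A.

Definition psd (P : 'M[R]_N) : Prop :=
  symmx P /\ forall v : 'rV[R]_N, 0 <= (v *m P *m v^T) ord0 ord0.

Definition eignorm (A : 'M[R]_N) : R :=
  sup [set `|a| | a in [set a : R | eigenvalue A a]].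

Definition pdist (p q : R * 'M[R]_N) : R :=
  Num.max `|p.1 - q.1| (eignorm (p.2 - q.2)).

Definition RS : set (R * 'M[R]_N) := [set p | symmx p.2].

Definition Qcone : set (R * 'M[R]_N) := [set p | p.1 <= 0 /\ psd p.2].

Definition nclosed (C : set (R * 'M[R]_N)) : Prop :=
  forall p, RS p ->
    (forall e : R, 0 < e -> exists2 q, C q & pdist p q < e) -> C p.

Definition proper_elliptic (Omega : set 'rV[R]_N)
    (Th : 'rV[R]_N -> set (R * 'M[R]_N)) : Prop :=
  forall x, Omega x ->
    [/\ Th x `<=` RS, nclosed (Th x), Th x !=set0, Th x != RS &
        forall p q, Th x p -> Qcone q -> Th x (p.1 + q.1, p.2 + q.2)].

(* distance from a point to a set (+oo if the set is empty) *)
Definition pt_set_dist (p : R * 'M[R]_N) (Y : set (R * 'M[R]_N)) : \bar R :=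
  ereal_inf [set (pdist p q)%:E | q in Y].

Definition hausdorff_dist (X Y : set (R * 'M[R]_N)) : \bar R :=
  Order.max (ereal_sup [set pt_set_dist p Y | p in X])
            (ereal_sup [set pt_set_dist q X | q in Y]).

Definition hausdorff_continuous (Omega : set 'rV[R]_N)
    (Th : 'rV[R]_N -> set (R * 'M[R]_N)) : Prop :=
  forall x, Omega x -> forall eta : R, 0 < eta ->
    exists2 delta : R, 0 < delta &
      forall y, Omega y -> eucl x y < delta ->
        (hausdorff_dist (Th x) (Th y) < eta%:E)%E.

Definition F_continuous (Omega : set 'rV[R]_N)
    (F : 'rV[R]_N -> R -> 'M[R]_N -> R) : Prop :=
  forall x r A, Omega x -> symmx A -> forall e : R, 0 < e ->
    exists2 d : R, 0 < d &
      forall y s B, Omega y -> symmx B ->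
        eucl x y < d -> pdist (r, A) (s, B) < d ->
        `|F x r A - F y s B| < e.

Definition cc_subset (O' O : set 'rV[R]_N) : Prop :=
  compact (closure O') /\ closure O' `<=` O.

End Defs.

(* Main.v *)
Require Import Defs.
From HB Require Import structures.
From mathcomp Require Import all_boot all_order all_algebra.
From mathcomp Require Import all_classical all_reals all_analysis.
From mathcomp Require Import ring lra.
Import Order.TTheory GRing.Theory Num.Theory.
Import numFieldNormedType.Exports.
Local Open Scope classical_set_scope.
Local Open Scope ring_scope.
Set Implicit Arguments. Unset Strict Implicit. Unset Printing Implicit Defensive.

Section LA.
Variable R : realType.

Definition qf n (M : 'M[R]_n) (v : 'rV[R]_n) : R := (v *m M *m v^T) ord0 ord0.
Definition nsq n (v : 'rV[R]_n) : R := (v *m v^T) ord0 ord0.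

Lemma nsqE n (v : 'rV[R]_n) : nsq v = \sum_i v ord0 i ^+ 2.
Proof. by rewrite /nsq mxE; apply: eq_bigr => i _; rewrite mxE expr2. Qed.

Lemma nsq_ge0 n (v : 'rV[R]_n) : 0 <= nsq v.
Proof. by rewrite nsqE; apply: sumr_ge0 => i _; exact: sqr_ge0. Qed.

Lemma nsq_eq0 n (v : 'rV[R]_n) : nsq v = 0 -> v = 0.
Proof.
rewrite nsqE => /eqP; rewrite psumr_eq0 => [/allP H|i _]; last exact: sqr_ge0.
apply/rowP => i; rewrite mxE; apply/eqP; rewrite -sqrf_eq0.
exact: (implyP (H i (mem_index_enum _))).
Qed.

Lemma coord_le_nsq n (v : 'rV[R]_n) i : v ord0 i ^+ 2 <= nsq v.
Proof.
rewrite nsqE (bigD1 i) //= lerDl; apply: sumr_ge0 => j _; exact: sqr_ge0.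
Qed.

Lemma qfZ n (M : 'M[R]_n) k v : qf M (k *: v) = k ^+ 2 * qf M v.
Proof.
rewrite /qf -scalemxAl linearZ /= -scalemxAr -scalemxAl !mxE.
by rewrite mulrA expr2.
Qed.

Lemma nsqZ n k (v : 'rV[R]_n) : nsq (k *: v) = k ^+ 2 * nsq v.
Proof.
by rewrite /nsq linearZ /= -scalemxAr -scalemxAl !mxE mulrA expr2.
Qed.

Lemma qfE n (M : 'M[R]_n) v :
  qf M v = \sum_j (\sum_k v ord0 k * M k j) * v ord0 j.
Proof.
rewrite /qf mxE; apply: eq_bigr => j _; rewrite !mxE; congr (_ * _).
Qed.

Lemma cont_sum (T : topologicalType) (I : Type) (s : seq I) (f : I -> T -> R) :
  (forall i, continuous (f i)) -> continuous (fun x => \sum_(i <- s) f i x).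
Proof.
move=> fc; elim: s => [|a s IH].
  have -> : (fun x => \sum_(i <- [::]) f i x) = fun=> 0.
    by apply: funext => x; rewrite big_nil.
  exact: cst_continuous.
have -> : (fun x => \sum_(i <- a :: s) f i x) =
   (fun x => f a x + \sum_(i <- s) f i x).
  by apply: funext => x; rewrite big_cons.
move=> x; apply: continuousD; [exact: fc | exact: IH].
Qed.

Lemma qf_cont n (M : 'M[R]_n) : continuous (qf M).
Proof.
have -> : qf M = fun v => \sum_j (\sum_k v ord0 k * M k j) * v ord0 j.
  by apply: funext => v; rewrite qfE.
apply: cont_sum => j v.
apply: (@continuousM _ _ (fun v : 'rV[R]_n => \sum_k v ord0 k * M k j)
   (fun v => v ord0 j)); last exact: coord_continuous.
apply: cont_sum => k w.
apply: (@continuousM _ _ (fun v : 'rV[R]_n => v ord0 k) (fun=> M k j)).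
  exact: coord_continuous.
exact: cst_continuous.
Qed.

Lemma nsq_cont n : continuous (@nsq n).
Proof.
have -> : @nsq n = qf 1%:M.
  by apply: funext => v; rewrite /qf /nsq mulmx1.
exact: qf_cont.
Qed.


Lemma qf_homog n (M : 'M[R]_n) m :
  (forall v, nsq v = 1 -> m <= qf M v) -> forall v, m * nsq v <= qf M v.
Proof.
move=> H v; have [v0|vn0] := eqVneq v 0.
  by rewrite v0 /qf /nsq !mul0mx mxE mulr0.
have sp : 0 < nsq v.
  rewrite lt_neqAle nsq_ge0 andbT eq_sym; apply/eqP => /nsq_eq0 h.
  by rewrite h eqxx in vn0.
set k := (Num.sqrt (nsq v))^-1.
have k2 : k ^+ 2 * nsq v = 1.
  by rewrite /k exprVn sqr_sqrtr ?nsq_ge0 // mulVf // gt_eqF.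
have := H (k *: v); rewrite nsqZ qfZ => /(_ k2) h.
have k2' : k ^+ 2 = (nsq v)^-1.
  by apply: (mulIf (lt0r_neq0 sp)); rewrite k2 mulVf ?lt0r_neq0.
rewrite k2' in h.
by rewrite -ler_pdivlMr // mulrC.
Qed.

Lemma qf_sub n (M : 'M[R]_n) m v : qf (M - m%:M) v = qf M v - m * nsq v.
Proof.
by rewrite /qf /nsq mulmxBr mulmxBl mul_mx_scalar -scalemxAl !mxE.
Qed.

Lemma qf_add n (M : 'M[R]_n) m v : qf (M + m%:M) v = qf M v + m * nsq v.
Proof.
by rewrite /qf /nsq mulmxDr mulmxDl mul_mx_scalar -scalemxAl !mxE.
Qed.

Lemma qf_polar n (P : 'M[R]_n) u w t : P^T = P ->
  qf P (u + t *: w) = qf P u + 2 * t * (u *m P *m w^T) ord0 ord0 + t ^+ 2 * qf P w.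
Proof.
move=> sP.
have sym : (w *m P *m u^T) ord0 ord0 = (u *m P *m w^T) ord0 ord0.
  have e : (w *m P *m u^T)^T = u *m P *m w^T.
    by rewrite !trmx_mul trmxK sP mulmxA.
  by rewrite -e [RHS]mxE.
rewrite /qf linearD /= linearZ /= !mulmxDl !mulmxDr.
rewrite -!scalemxAl -!scalemxAr /qf; move: sym.
move: (u *m P *m u^T) (u *m P *m w^T) (w *m P *m u^T) (w *m P *m w^T) => a b c d.
rewrite !mxE => ->; ring.
Qed.

Lemma quad_lin (b c : R) : 0 <= c -> (forall t, 0 <= 2 * t * b + t ^+ 2 * c) -> b = 0.
Proof.
move=> c0 H; have := H (- b / (c + 1)).
have d0 : 0 < c + 1 by rewrite ltr_wpDl.
set t := - b / (c + 1).
have -> : 2 * t * b + t ^+ 2 * c = b ^+ 2 * (- c - 2) / (c + 1) ^+ 2.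
  rewrite /t; field; by rewrite gt_eqF.
rewrite pmulr_lge0 ?invr_gt0 ?exprn_gt0 //.
move=> h; apply/eqP; rewrite -sqrf_eq0 eq_le sqr_ge0 andbT.
have b2 := sqr_ge0 b. nra.
Qed.

Lemma rayleigh_min n (M : 'M[R]_n.+1) : M^T = M ->
  exists m, eigenvalue M m /\ forall v, m * nsq v <= qf M v.
Proof.
move=> sM.
pose S := [set v : 'rV[R]_n.+1 | nsq v = 1].
have S0 : S !=set0.
  exists (delta_mx 0 0); rewrite /S /= nsqE (bigD1 ord0) //= big1 ?addr0.
    by rewrite mxE eqxx /= expr1n.
  by move=> i /negbTE ni; rewrite mxE ni andbF expr0n.
have Scl : closed S.
  have -> : S = (@nsq n.+1) @^-1` [set x | x = 1] by [].
  apply: closed_comp; last exact: closed_eq.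
  by move=> x _; exact: nsq_cont.
have Sco : compact S.
  have Bco : compact [set v : 'rV[R]_n.+1 | forall i, `[-1, 1]%classic (v ord0 i)].
    by apply: (@rV_compact R n.+1 (fun=> `[-1, 1]%classic)) => _; exact: segment_compact.
  apply: (subclosed_compact Scl Bco).
  move=> v Sv i /=; rewrite in_itv /= -ler_norml.
  have := coord_le_nsq v i; rewrite Sv -real_normK ?num_real // => h.
  by rewrite -(expr_le1 (_ : 0 < 2)%N) ?normr_ge0.
have [u uS umin] := compact_EVT_min S0 Sco (continuous_subspaceT (@qf_cont _ M)).
have {}uS : nsq u = 1 by rewrite inE in uS.
set m := qf M u.
have hall : forall v, m * nsq v <= qf M v.
  apply: qf_homog => v vS; apply: umin; rewrite inE; exact: vS.
exists m; split => //.
pose P := M - m%:M.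
have sP : P^T = P by rewrite /P linearB /= tr_scalar_mx sM.
have Pge0 : forall v, 0 <= qf P v by move=> v; rewrite qf_sub subr_ge0.
have Pu : qf P u = 0 by rewrite qf_sub uS mulr1 subrr.
have bil : forall w : 'rV[R]_n.+1, (u *m P *m w^T) ord0 ord0 = 0.
  move=> w; apply: (quad_lin (Pge0 w)) => t.
  by have := Pge0 (u + t *: w); rewrite qf_polar // Pu add0r.
have uP0 : u *m P = 0.
  apply/rowP => j; rewrite [RHS]mxE.
  have := bil (delta_mx 0 j); rewrite trmx_delta -colE mxE => <-.
  by rewrite mxE.
apply/eigenvalueP; exists u.
  by move: uP0; rewrite /P mulmxBr mul_mx_scalar => /eqP; rewrite subr_eq0 => /eqP.
by apply/eqP => u0; move: uS; rewrite u0 /nsq mul0mx mxE => /eqP; rewrite eq_sym oner_eq0.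
Qed.


Lemma eig_qf n (M : 'M[R]_n) a v : v *m M = a *: v -> qf M v = a * nsq v.
Proof. by rewrite /qf /nsq => ->; rewrite -scalemxAl [LHS]mxE. Qed.

Lemma nsq_gt0 n (v : 'rV[R]_n) : v != 0 -> 0 < nsq v.
Proof.
move=> vn0; rewrite lt_neqAle nsq_ge0 andbT eq_sym; apply/eqP => /nsq_eq0 h.
by rewrite h eqxx in vn0.
Qed.

Lemma eig_bound n (M : 'M[R]_n) : M^T = M ->
  exists B, forall a, eigenvalue M a -> `|a| <= B.
Proof.
case: n M => [|n] M sM.
  by exists 0 => a /eigenvalueP [v _]; rewrite thinmx0 eqxx.
have [m [_ hm]] := rayleigh_min sM.
have sM' : (-M)^T = -M by rewrite linearN /= sM.
have [m' [_ hm']] := rayleigh_min sM'.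
exists (`|m| + `|m'|) => a /eigenvalueP [v va vn0].
have sp := nsq_gt0 vn0.
have e1 := hm v; rewrite (eig_qf va) ler_pM2r // in e1.
have va' : v *m (- M) = (- a) *: v by rewrite mulmxN va scaleNr.
have e2 := hm' v; rewrite (eig_qf va') ler_pM2r // in e2.
have h1 := ler_norm m; have h2 := ler_norm (- m); rewrite normrN in h2.
have h3 := ler_norm m'; have h4 := ler_norm (- m'); rewrite normrN in h4.
rewrite ler_norml; apply/andP; split; lra.
Qed.

Lemma psd_shift n (M : 'M[R]_n) c : M^T = M ->
  (forall a, eigenvalue M a -> - c <= a) -> psd (M + c%:M).
Proof.
move=> sM hc; split; first by rewrite /symmx linearD /= tr_scalar_mx sM.
move=> v; case: n M sM hc v => [|n] M sM hc v.
  by rewrite !mxE big_ord0.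
have [m [em hm]] := rayleigh_min sM.
have := hc m em => cm.
rewrite -/(qf _ v) qf_add.
have := hm v; have := nsq_ge0 v => h0 h1.
have mc : 0 <= m + c by lra.
have : 0 <= (m + c) * nsq v by rewrite mulr_ge0.
lra.
Qed.

Lemma eignorm_lt n (M : 'M[R]_n) e : M^T = M -> eignorm M < e ->
  forall a, eigenvalue M a -> `|a| < e.
Proof.
move=> sM he a ea; apply: le_lt_trans he.
have [B hB] := eig_bound sM.
apply: sup_upper_bound; last by exists a.
split; first by exists `|a|, a.
by exists B => _ [b eb <-]; exact: hB.
Qed.

Lemma eignorm_scal n (c : R) : 0 <= c -> eignorm (- c%:M : 'M[R]_n) <= c.
Proof.
move=> c0; rewrite /eignorm.
set S := [set `|a| | a in _].
have ub : ubound S c.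
  move=> _ [a /eigenvalueP [v va vn0] <-].
  move: va; rewrite mulmxN mul_mx_scalar => /eqP.
  rewrite -scaleNr -subr_eq0 -scalerBl scalemx_eq0 (negbTE vn0) orbF subr_eq0.
  by move=> /eqP <-; rewrite normrN ger0_norm.
have [ne|ne] := pselect (S !=set0); first exact: ge_sup.
rewrite (_ : S = set0) ?sup0 //; apply/seteqP; split => x // Sx.
by exfalso; apply: ne; exists x.
Qed.

End LA.

Section Main.
Variables (R : realType) (N : nat).
Implicit Types (X Y : set (R * 'M[R]_N)).

Lemma hd_pt X Y c p : (hausdorff_dist X Y < c%:E)%E -> X p ->
  exists2 q, Y q & pdist p q < c.
Proof.
rewrite /hausdorff_dist gt_max => /andP[h1 _] Xp.
have : (pt_set_dist p Y < c%:E)%E.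
  apply: le_lt_trans h1; apply: ereal_sup_ubound; by exists p.
move/ereal_inf_lt => [_ [q Yq <-]]; rewrite lte_fin => h.
by exists q.
Qed.

Lemma hd_pt' X Y c q : (hausdorff_dist X Y < c%:E)%E -> Y q ->
  exists2 p, X p & pdist q p < c.
Proof.
rewrite /hausdorff_dist gt_max => /andP[_ h1] Yq.
have : (pt_set_dist q X < c%:E)%E.
  apply: le_lt_trans h1; apply: ereal_sup_ubound; by exists q.
move/ereal_inf_lt => [_ [p Xp <-]]; rewrite lte_fin => h.
by exists p.
Qed.

Lemma hd_le X Y c :
  (forall p, X p -> exists2 q, Y q & pdist p q <= c) ->
  (forall q, Y q -> exists2 p, X p & pdist q p <= c) ->
  (hausdorff_dist X Y <= c%:E)%E.
Proof.
move=> h1 h2; rewrite /hausdorff_dist ge_max; apply/andP; split;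
  apply: ge_ereal_sup => _ [p Xp <-].
  have [q Yq hq] := h1 p Xp.
  have : (pt_set_dist p Y <= (pdist p q)%:E)%E by apply: ereal_inf_lbound; exists q.
  by move/le_trans; apply; rewrite lee_fin.
have [q Yq hq] := h2 p Xp.
have : (pt_set_dist p X <= (pdist p q)%:E)%E by apply: ereal_inf_lbound; exists q.
by move/le_trans; apply; rewrite lee_fin.
Qed.

Lemma pdist_shift r (A : 'M[R]_N) c : 0 <= c -> pdist (r, A) (r - c, A + c%:M) <= c.
Proof.
move=> c0; rewrite /pdist /= ge_max; apply/andP; split.
  by rewrite opprB addrC subrK ger0_norm.
by rewrite opprD addrA subrr add0r; exact: eignorm_scal.
Qed.

Lemma coord_le_eucl (x y : 'rV[R]_N) i : `|x ord0 i - y ord0 i| <= eucl x y.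
Proof.
rewrite /eucl -sqrtr_sqr ler_sqrt; last by apply: sumr_ge0 => j _; exact: sqr_ge0.
rewrite (bigD1 i) //= lerDl; apply: sumr_ge0 => j _; exact: sqr_ge0.
Qed.

Lemma ball_eucl (x y : 'rV[R]_N) d : 0 < d -> eucl x y < d -> ball x d y.
Proof.
move=> d0 h; rewrite -ball_normE /ball_ /= [X in X < _]/Num.Def.normr /= mx_normrE.
apply/bigmax_ltP; split => // -[a j] _ /=; rewrite ord1 !mxE.
exact: le_lt_trans (coord_le_eucl x y j) h.
Qed.

Lemma ball_coord (x y : 'rV[R]_N) d i : ball x d y -> `|x ord0 i - y ord0 i| <= d.
Proof.
rewrite -ball_normE /ball_ /= [X in X < _]/Num.Def.normr /= mx_normrE => h.
apply: ltW; apply: le_lt_trans h.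
have -> : x ord0 i - y ord0 i = (x - y) ord0 i by rewrite !mxE.
by apply/bigmax_geP; right; exists (ord0, i).
Qed.


Lemma eucl_sym (x y : 'rV[R]_N) : eucl x y = eucl y x.
Proof.
by rewrite /eucl; congr Num.sqrt; apply: eq_bigr => i _; rewrite -sqrrN opprB.
Qed.

Lemma cc_ball (O : set 'rV[R]_N) x e : 0 < e -> ball x e `<=` O ->
  open (ball x (e / 2)) /\ cc_subset (ball x (e / 2)) O.
Proof.
move=> e0 hO; split; first exact: ball_open.
have sub : closure (ball x (e / 2)) `<=` ball x e := subset_closure_half e0.
split; last by move=> y /sub /hO.
have Bco : compact [set v : 'rV[R]_N |
    forall i, `[x ord0 i - e, x ord0 i + e]%classic (v ord0 i)].
  by apply: (@rV_compact R N (fun i => `[x ord0 i - e, x ord0 i + e]%classic)) => i;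
    exact: segment_compact.
apply: (subclosed_compact (@closed_closure _ _) Bco) => y /sub /= /ball_coord h i.
have := h i; rewrite ler_norml => /andP[h1 h2].
rewrite /= in_itv /=; apply/andP; split; lra.
Qed.

Lemma one_side (Px Py : set (R * 'M[R]_N)) (Fx Fy : R -> 'M[R]_N -> R) c :
  0 <= c ->
  (forall r A, Px (r, A) -> symmx A -> Py (r - c, A + c%:M)) ->
  (forall r A, Px (r, A) -> Fx r A <= Fy (r - c) (A + c%:M)) ->
  [set p | Px p /\ 0 <= Fx p.1 p.2] `<=` @RS R N ->
  forall p, [set p | Px p /\ 0 <= Fx p.1 p.2] p ->
  exists2 q, [set p | Py p /\ 0 <= Fy p.1 p.2] q & pdist p q <= c.
Proof.
move=> c0 hP hF hRS [r A] [Pp Fp].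
have sA : symmx A := hRS _ (conj Pp Fp).
exists (r - c, A + c%:M); last exact: pdist_shift.
split; first exact: hP.
exact: le_trans Fp (hF _ _ Pp).
Qed.

Lemma transfer (P : set (R * 'M[R]_N)) c r A s B :
  P `<=` @RS R N -> (forall p q, P p -> Qcone q -> P (p.1 + q.1, p.2 + q.2)) ->
  symmx A -> P (s, B) -> pdist (r, A) (s, B) < c -> P (r - c, A + c%:M).
Proof.
move=> PRS Pell sA PB.
have sB : symmx B := PRS _ PB.
rewrite /pdist gt_max /= => /andP [hr hM].
have sM : (A - B)^T = A - B by rewrite linearB /= sA sB.
have eigs := eignorm_lt sM hM.
have Q : Qcone (r - c - s, A + c%:M - B).
  split => /=.
    by move: hr; rewrite ltr_norml => /andP[h1 h2]; lra.
  have -> : A + c%:M - B = (A - B) + c%:M by rewrite addrAC.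
  by apply: psd_shift => // a /eigs; rewrite ltr_norml => /andP[h _]; exact: ltW.
have := Pell _ _ PB Q => /=.
have -> : s + (r - c - s) = r - c by rewrite addrC subrK.
by have -> : B + (A + c%:M - B) = A + c%:M by rewrite addrC subrK.
Qed.

End Main.

Theorem theorem6p8 (R : realType) (N : nat) (Omega : set 'rV[R]_N)
  (F : 'rV[R]_N -> R -> 'M[R]_N -> R)
  (Phi : 'rV[R]_N -> set (R * 'M[R]_N)) :
  bounded_set Omega -> open Omega -> connected Omega ->
  F_continuous Omega F ->
  (forall x, Omega x -> exists r A, symmx A /\ F x r A = 0) ->
  ((proper_elliptic Omega Phi /\ hausdorff_continuous Omega Phi) \/
   (forall x, Omega x -> Phi x = RS (R:=R) (N:=N))) ->
  proper_elliptic Omega (fun x => [set p | Phi x p /\ 0 <= F x p.1 p.2]) ->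
  (forall Omega' : set 'rV[R]_N, open Omega' -> cc_subset Omega' Omega ->
     forall eta : R, 0 < eta ->
     exists2 delta : R, 0 < delta &
       forall x y, Omega' x -> Omega' y -> eucl x y < delta ->
       forall r A, Phi x (r, A) ->
         F x r A <= F y (r - eta) (A + eta%:M)) ->
  hausdorff_continuous Omega (fun x => [set p | Phi x p /\ 0 <= F x p.1 p.2]).
Proof.
move=> bO oO cO Fc Fz HPhi HTh Hloc x Ox eta eta0.
have [e e0 exO] : exists2 e, 0 < e & ball x e `<=` Omega.
  have : nbhs x Omega by apply: open_nbhs_nbhs; split.
  by move/nbhs_ballP => [e e0 h]; exists e.
have [oO' ccO'] := cc_ball e0 exO.
set c := eta / 2.
have c0 : 0 < c by rewrite divr_gt0.
have [d2 d20 H2] := Hloc _ oO' ccO' c c0.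
have e20 : 0 < e / 2 by rewrite divr_gt0.
have xO' : ball x (e / 2) x by exact: ballxx.
have [d1 [d10 Htr]] : exists d1, 0 < d1 /\ forall y, Omega y -> eucl x y < d1 ->
   (forall r A, Phi x (r, A) -> symmx A -> Phi y (r - c, A + c%:M)) /\
   (forall r A, Phi y (r, A) -> symmx A -> Phi x (r - c, A + c%:M)).
  case: HPhi => [[PE PH]|PRS].
    have [d1 d10 H1] := PH x Ox c c0.
    exists d1; split => // y Oy xy.
    have hd := H1 y Oy xy.
    have [PxRS _ _ _ Pxell] := PE x Ox.
    have [PyRS _ _ _ Pyell] := PE y Oy.
    split => r A PA sA.
      have [[s B] PB hq] := hd_pt hd PA.
      exact: transfer PyRS Pyell sA PB hq.
    have [[s B] PB hq] := hd_pt' hd PA.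
    exact: transfer PxRS Pxell sA PB hq.
  exists 1; split => // y Oy xy.
  have sym : forall A : 'M[R]_N, symmx A -> symmx (A + c%:M).
    by move=> A sA; rewrite /symmx linearD /= tr_scalar_mx sA.
  by rewrite (PRS x Ox) (PRS y Oy); split => r A _ sA; exact: sym.
exists (Num.min d1 (Num.min d2 (e / 2))).
  by rewrite !lt_min d10 d20 e20.
move=> y Oy; rewrite !lt_min => /and3P [xy1 xy2 xy3].
have yO' : ball x (e / 2) y := ball_eucl e20 xy3.
have [T1 T2] := Htr y Oy xy1.
have [RSx _ _ _ _] := HTh x Ox.
have [RSy _ _ _ _] := HTh y Oy.
apply: (@le_lt_trans _ _ c%:E); last by rewrite lte_fin /c ltr_pdivrMr // ltr_pMr // ltr1n.
apply: hd_le.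
  apply: one_side (ltW c0) T1 _ RSx => r A PA.
  exact: H2 xO' yO' xy2 r A PA.
apply: one_side (ltW c0) T2 _ RSy => r A PA.
by apply: H2 yO' xO' _ r A PA; rewrite eucl_sym.
Qed.
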